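(* Let $0<s<r<r_{max}(M)$, $\lambda>0$, and let $h_r$, $h_s$ be the solutions of $h''(h')^{n-1}=e^{\lambda h}\mathcal D_M(u)$ on $[0,r)$ resp. $[0,s)$ with $h_r\to\infty$ as $u\to r$ and $h_s\to\infty$ as $u\to s$. Then $h_r(u)\le h_s(u)$ for all $u\in[0,s)$.
   Context: For a real-analytic Riemannian manifold $M$ of real dimension $n\ge2$, $u=\sqrt\rho$ with $\rho(x,v)=4|v|^2$ on the Grauert tube $T^rM$. $\mathcal D_M$ is: $u^{n-1}$ for $\mathbb R^n$; $(\sin u)^{n-1}$ for $H^n$ ($r_{max}=\pi$); $(\sinh u)^{n-1}$ for the round sphere and real projective space; $2^{n-1}(\cosh\frac u2)^k(\sinh\frac u2)^{n-1}$, $k=1,3,7$, for complex projective space, quaternionic projective space, Cayley plane ($r_{max}=\infty$ except for $H^n$). Solutions are taken real-analytic in $u^2$ (so $h'(0)=0$), with $h'>0$ on $(0,r)$. *)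

(* Defs.v *)
From Stdlib Require Import Reals Lra Lia.
Open Scope R_scope.

(* The model manifolds of the paper (RP^n has the same D_M as the round
   sphere, so Sphere covers both S^n and RP^n). *)
Inductive model : Type :=
  | Euclid
  | Hyperbolic
  | Sphere
  | CPn
  | HPn
  | Cayley.

Definition valid_dim (M : model) (n : nat) : Prop :=
  match M with
  | Euclid | Hyperbolic | Sphere => (2 <= n)%nat
  | CPn => (2 <= n)%nat /\ Nat.Even n
  | HPn => (4 <= n)%nat /\ Nat.divide 4 n
  | Cayley => n = 16%nat
  end.

Definition DM (M : model) (n : nat) (u : R) : R :=
  match M with
  | Euclid => u ^ (n - 1)
  | Hyperbolic => (sin u) ^ (n - 1)
  | Sphere => (sinh u) ^ (n - 1)
  | CPn => 2 ^ (n - 1) * (cosh (u / 2)) ^ 1 * (sinh (u / 2)) ^ (n - 1)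
  | HPn => 2 ^ (n - 1) * (cosh (u / 2)) ^ 3 * (sinh (u / 2)) ^ (n - 1)
  | Cayley => 2 ^ (n - 1) * (cosh (u / 2)) ^ 7 * (sinh (u / 2)) ^ (n - 1)
  end.

Definition below_rmax (M : model) (r : R) : Prop :=
  match M with
  | Hyperbolic => r < PI
  | _ => True
  end.

Definition analytic_on_Ico (g : R -> R) (a : R) : Prop :=
  forall t0, 0 <= t0 < a ->
    exists (c : nat -> R) (delta : R), 0 < delta /\
      forall t, Rabs (t - t0) < delta ->
        infinite_sum (fun k => c k * (t - t0) ^ k) (g t).

(* h is real-analytic in u^2 on [0,r): h(u) = g(u^2) with g real-analytic on
   [0, r^2).  We take h on the symmetric interval (-r, r), i.e. h is given
   together with its (unique) even extension, so that derivatives at u = 0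
   are ordinary two-sided derivatives. *)
Definition analytic_in_u2 (h : R -> R) (r : R) : Prop :=
  exists g : R -> R, analytic_on_Ico g (r * r) /\
    forall u, -r < u < r -> h u = g (u * u).

Definition blowup_solution (M : model) (n : nat) (lam r : R) (h : R -> R) : Prop :=
  analytic_in_u2 h r /\
  exists h1 h2 : R -> R,
    (forall u, 0 <= u < r ->
       derivable_pt_lim h u (h1 u) /\
       derivable_pt_lim h1 u (h2 u) /\
       h2 u * (h1 u) ^ (n - 1) = exp (lam * h u) * DM M n u) /\
    (forall u, 0 < u < r -> 0 < h1 u) /\
    (forall K : R, exists delta, 0 < delta /\
       forall u, r - delta < u < r -> K < h u).

(* Main.v *)
Require Import Defs.
From Stdlib Require Import Reals Lra Lia Classical.
Open Scope R_scope.

Lemma cosh_pos' x : 0 < cosh x.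
Proof. unfold cosh. generalize (exp_pos x) (exp_pos (-x)); lra. Qed.

Lemma sinh_pos' x : 0 < x -> 0 < sinh x.
Proof. intro H. rewrite <- sinh_0. now apply sinh_lt. Qed.

Lemma DM_pos M n r u : below_rmax M r -> 0 < u < r -> 0 < DM M n u.
Proof.
  intros Hb [H1 H2]. destruct M; unfold DM, below_rmax in *.
  - now apply pow_lt.
  - apply pow_lt, sin_gt_0; lra.
  - apply pow_lt, sinh_pos'; lra.
  - assert (0 < cosh (u/2)) by apply cosh_pos'. assert (0 < sinh (u/2)) by (apply sinh_pos'; lra).
    apply Rmult_lt_0_compat; [apply Rmult_lt_0_compat|]; apply pow_lt; lra.
  - assert (0 < cosh (u/2)) by apply cosh_pos'. assert (0 < sinh (u/2)) by (apply sinh_pos'; lra).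
    apply Rmult_lt_0_compat; [apply Rmult_lt_0_compat|]; apply pow_lt; lra.
  - assert (0 < cosh (u/2)) by apply cosh_pos'. assert (0 < sinh (u/2)) by (apply sinh_pos'; lra).
    apply Rmult_lt_0_compat; [apply Rmult_lt_0_compat|]; apply pow_lt; lra.
Qed.

Lemma even_deriv0 (h : R -> R) r l : 0 < r -> (forall x, -r < x < r -> h (-x) = h x) ->
  derivable_pt_lim h 0 l -> l = 0.
Proof.
  intros Hr He Hd.
  destruct (Req_dec l 0) as [E|E]; [exact E|exfalso].
  assert (Hl : 0 < Rabs l / 2) by (generalize (Rabs_pos_lt l E); lra).
  destruct (Hd _ Hl) as [d Hdd].
  set (t := Rmin d r / 2).
  assert (Ht : 0 < t) by (unfold t; generalize (cond_pos d); unfold Rmin; destruct Rle_dec; lra).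
  assert (Ht2 : t < d /\ t < r) by (unfold t; generalize (cond_pos d); unfold Rmin; destruct Rle_dec; lra).
  assert (A := Hdd t ltac:(lra) ltac:(rewrite Rabs_right; lra)).
  assert (B := Hdd (-t) ltac:(lra) ltac:(rewrite Rabs_left; lra)).
  rewrite Rplus_0_l in A, B. rewrite He in B by lra.
  replace ((h t - h 0) / - t) with (- ((h t - h 0) / t)) in B by (field; lra).
  set (q := (h t - h 0) / t) in *.
  revert A B. unfold Rabs; repeat destruct Rcase_abs; lra.
Qed.

Lemma deriv_left_nonpos f x l d : 0 < d -> derivable_pt_lim f x l -> f x <= 0 ->
  (forall y, x - d < y < x -> 0 < f y) -> l <= 0.
Proof.
  intros Hd Hf Hx Hy. destruct (Rle_dec l 0) as [E|E]; [exact E|exfalso].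
  assert (Hl : 0 < l) by lra.
  destruct (Hf _ Hl) as [e He].
  set (t := Rmin e d / 2).
  assert (Ht : 0 < t /\ t < e /\ t < d) by (unfold t; generalize (cond_pos e); unfold Rmin; destruct Rle_dec; lra).
  assert (A := He (-t) ltac:(lra) ltac:(rewrite Rabs_left; lra)).
  assert (B := Hy (x + - t) ltac:(lra)).
  assert (C : (f (x + - t) - f x) / - t < 0).
  { replace ((f (x + - t) - f x) / - t) with (- ((f (x + - t) - f x) / t)) by (field; lra).
    assert (0 < (f (x + - t) - f x) / t) by (apply Rdiv_lt_0_compat; lra). lra. }
  revert A C. unfold Rabs; destruct Rcase_abs; lra.
Qed.

Lemma deriv_right_nonneg f x l d : 0 < d -> derivable_pt_lim f x l -> f x <= 0 ->
  (forall y, x < y < x + d -> 0 < f y) -> 0 <= l.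
Proof.
  intros Hd Hf Hx Hy. destruct (Rle_dec 0 l) as [E|E]; [exact E|exfalso].
  assert (Hl : 0 < - l) by lra.
  destruct (Hf _ Hl) as [e He].
  set (t := Rmin e d / 2).
  assert (Ht : 0 < t /\ t < e /\ t < d) by (unfold t; generalize (cond_pos e); unfold Rmin; destruct Rle_dec; lra).
  assert (A := He t ltac:(lra) ltac:(rewrite Rabs_right; lra)).
  assert (B := Hy (x + t) ltac:(lra)).
  assert (C : 0 < (f (x + t) - f x) / t) by (apply Rdiv_lt_0_compat; lra).
  revert A C. unfold Rabs; destruct Rcase_abs; lra.
Qed.

Lemma cont_pos (w : R -> R) b : continuity_pt w b -> 0 < w b ->
  exists d, 0 < d /\ forall y, Rabs (y - b) < d -> 0 < w y.
Proof.
  intros Hc Hb. destruct (Hc (w b) Hb) as [d [Hd Hy]].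
  exists d; split; [exact Hd|]. intros y Hyb.
  destruct (Req_dec b y) as [E|E]; [subst; exact Hb|].
  assert (H := Hy y (conj (conj I E) Hyb)). unfold R_dist in H.
  apply Rabs_def2 in H; lra.
Qed.

Lemma cont_neg (w : R -> R) b : continuity_pt w b -> w b < 0 ->
  exists d, 0 < d /\ forall y, Rabs (y - b) < d -> w y < 0.
Proof.
  intros Hc Hb. destruct (Hc (- w b) ltac:(lra)) as [d [Hd Hy]].
  exists d; split; [exact Hd|]. intros y Hyb.
  destruct (Req_dec b y) as [E|E]; [subst; exact Hb|].
  assert (H := Hy y (conj (conj I E) Hyb)). unfold R_dist in H.
  apply Rabs_def2 in H; lra.
Qed.

Lemma first_nonpos (w : R -> R) p q : p < q -> (forall x, p <= x <= q -> continuity_pt w x) ->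
  0 < w p -> w q <= 0 ->
  exists b, p < b <= q /\ w b <= 0 /\ forall x, p <= x < b -> 0 < w x.
Proof.
  intros Hpq Hc Hp Hq.
  set (E := fun t => p <= t <= q /\ forall x, p <= x <= t -> 0 < w x).
  assert (Hb : bound E) by (exists q; intros t [Ht _]; lra).
  assert (He : exists t, E t) by (exists p; split; [lra| intros x Hx; replace x with p by lra; exact Hp]).
  destruct (completeness E Hb He) as [b [Hub Hlub]].
  assert (Hpb : p <= b) by (apply Hub; split; [lra| intros x Hx; replace x with p by lra; exact Hp]).
  assert (Hbq : b <= q) by (apply Hlub; intros t [Ht _]; lra).
  assert (Hlt : forall x, p <= x < b -> 0 < w x).
  { intros x Hx. destruct (classic (exists t, E t /\ x <= t)) as [[t [[_ Et] Hxt]]|N].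
    - apply Et; lra.
    - exfalso. assert (b <= x); [|lra]. apply Hlub. intros t Et.
      destruct (Rle_dec t x) as [F|F]; [exact F|]. exfalso; apply N; exists t; split; [exact Et|lra]. }
  destruct (Rle_dec (w b) 0) as [Wb|Wb].
  - exists b; repeat split; try lra; [|exact Hlt].
    destruct (Req_dec p b) as [F|F]; [subst; lra|lra].
  - exfalso. destruct (Req_dec b q) as [F|F]; [subst; lra|].
    destruct (cont_pos w b (Hc b ltac:(lra)) ltac:(lra)) as [d [Hd Hy]].
    set (t := Rmin (b + d/2) q).
    assert (Ht : b < t <= q /\ t < b + d) by (unfold t, Rmin; destruct Rle_dec; lra).
    assert (t <= b); [|lra]. apply Hub. split; [lra|].
    intros x Hx. destruct (Rlt_dec x b) as [G|G]; [apply Hlt; lra|].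
    apply Hy. rewrite Rabs_right; lra.
Qed.

Lemma last_nonpos (w : R -> R) p q : p < q -> (forall x, p <= x <= q -> continuity_pt w x) ->
  w p <= 0 -> 0 < w q ->
  exists a, p <= a < q /\ w a <= 0 /\ forall x, a < x <= q -> 0 < w x.
Proof.
  intros Hpq Hc Hp Hq.
  set (E := fun t => p <= t <= q /\ w t <= 0).
  assert (Hb : bound E) by (exists q; intros t [Ht _]; lra).
  assert (He : exists t, E t) by (exists p; split; lra).
  destruct (completeness E Hb He) as [a [Hub Hlub]].
  assert (Hpa : p <= a) by (apply Hub; split; lra).
  assert (Haq : a <= q) by (apply Hlub; intros t [Ht _]; lra).
  assert (Hgt : forall x, a < x <= q -> 0 < w x).
  { intros x Hx. destruct (Rlt_dec 0 (w x)) as [F|F]; [exact F|].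
    assert (x <= a) by (apply Hub; split; lra). lra. }
  destruct (Rle_dec (w a) 0) as [Wa|Wa].
  - exists a; repeat split; try lra; [|exact Hgt].
    destruct (Req_dec a q) as [F|F]; [subst; lra|lra].
  - exfalso. destruct (Req_dec a p) as [F|F]; [subst; lra|].
    destruct (cont_pos w a (Hc a ltac:(lra)) ltac:(lra)) as [d [Hd Hy]].
    set (t := Rmax (a - d/2) p).
    assert (Ht : p <= t < a /\ a - d < t) by (unfold t, Rmax; destruct Rle_dec; lra).
    assert (a <= t); [|lra]. apply Hlub. intros x [Hx Wx].
    destruct (Rle_dec x t) as [G|G]; [exact G|exfalso].
    destruct (Rle_dec x a) as [G2|G2].
    + assert (0 < w x) by (apply Hy; rewrite Rabs_left1; lra). lra.
    + assert (x <= a) by (apply Hub; split; lra). lra.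
Qed.

Lemma sol_h1_0 M n lam r h h1 h2 : 0 < r -> analytic_in_u2 h r ->
  (forall u, 0 <= u < r -> derivable_pt_lim h u (h1 u) /\ derivable_pt_lim h1 u (h2 u) /\
       h2 u * (h1 u) ^ (n - 1) = exp (lam * h u) * DM M n u) -> h1 0 = 0.
Proof.
  intros Hr [g [_ Hg]] Hd.
  apply (even_deriv0 h r); [exact Hr| |apply (Hd 0); lra].
  intros x Hx. rewrite !Hg by lra. f_equal; ring.
Qed.

Theorem lemma2p3 (M : model) (n : nat) (s r lam : R) (hr hs : R -> R) :
  valid_dim M n ->
  0 < s -> s < r -> below_rmax M r ->
  0 < lam ->
  blowup_solution M n lam r hr ->
  blowup_solution M n lam s hs ->
  forall u, 0 <= u < s -> hr u <= hs u.
Proof.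
  intros Hv Hs Hsr Hb Hl [Ar [h1r [h2r [Hr [Hr1 _]]]]] [As [h1s [h2s [Hs' [Hs1 Hsb]]]]] u0 Hu0.
  assert (Hn : (1 <= n)%nat) by (destruct M; simpl in Hv; lia).
  assert (Hr0 : h1r 0 = 0) by (apply (sol_h1_0 M n lam r hr h1r h2r); auto; lra).
  assert (Hs0 : h1s 0 = 0) by (apply (sol_h1_0 M n lam s hs h1s h2s); auto).
  assert (Pr : forall u, 0 <= u < r -> 0 <= h1r u).
  { intros u Hu. destruct (Req_dec u 0) as [E|E]; [subst; lra|]. apply Rlt_le, Hr1; lra. }
  assert (Ps : forall u, 0 <= u < s -> 0 <= h1s u).
  { intros u Hu. destruct (Req_dec u 0) as [E|E]; [subst; lra|]. apply Rlt_le, Hs1; lra. }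
  set (w := fun x => hr x - hs x).
  assert (Dw : forall x, 0 <= x < s -> derivable_pt_lim w x (h1r x - h1s x)).
  { intros x Hx. apply derivable_pt_lim_minus; [apply Hr; lra|apply Hs'; lra]. }
  assert (Cr : forall x, 0 <= x < r -> continuity_pt hr x).
  { intros x Hx. apply derivable_continuous_pt. exists (h1r x). apply Hr; lra. }
  assert (Cw : forall x, 0 <= x < s -> continuity_pt w x).
  { intros x Hx. apply derivable_continuous_pt. exists (h1r x - h1s x). apply Dw; lra. }
  set (psi := fun x => h1r x ^ n - h1s x ^ n).
  assert (La : forall a d, 0 < d -> 0 <= a < s -> w a <= 0 -> (forall y, a < y < a + d -> 0 < w y) -> 0 <= psi a).
  { intros a d Hd Ha Wa Hy. assert (H := deriv_right_nonneg w a _ d Hd (Dw a Ha) Wa Hy).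
    unfold psi. assert (h1s a ^ n <= h1r a ^ n); [|lra]. apply pow_incr. split; [apply Ps; lra|lra]. }
  assert (Lb : forall b d, 0 < d -> 0 <= b < s -> w b <= 0 -> (forall y, b - d < y < b -> 0 < w y) -> psi b <= 0).
  { intros b d Hd Hb' Wb Hy. assert (H := deriv_left_nonpos w b _ d Hd (Dw b Hb') Wb Hy).
    unfold psi. assert (h1r b ^ n <= h1s b ^ n); [|lra]. apply pow_incr. split; [apply Pr; lra|lra]. }
  assert (Main : forall a b, 0 <= a < b -> b < s -> (forall x, a < x < b -> 0 < w x) -> 0 <= psi a -> psi b <= 0 -> False).
  { intros a b Hab Hbs Hw Pa Pb.
    destruct (MVT_cor2 psi (fun x => INR n * h1r x ^ pred n * h2r x - INR n * h1s x ^ pred n * h2s x) a b)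
      as [c [Ec Hc]]; [lra| |].
    - intros c Hc. unfold psi. apply derivable_pt_lim_minus.
      + apply (derivable_pt_lim_comp h1r (fun y => y ^ n)); [apply Hr; lra|apply derivable_pt_lim_pow].
      + apply (derivable_pt_lim_comp h1s (fun y => y ^ n)); [apply Hs'; lra|apply derivable_pt_lim_pow].
    - assert (Ep : pred n = (n - 1)%nat) by lia. rewrite Ep in Ec.
      destruct (Hr c ltac:(lra)) as [_ [_ Or]]. destruct (Hs' c ltac:(lra)) as [_ [_ Os]].
      replace (INR n * h1r c ^ (n - 1) * h2r c - INR n * h1s c ^ (n - 1) * h2s c)
        with (INR n * (h2r c * h1r c ^ (n - 1) - h2s c * h1s c ^ (n - 1))) in Ec by ring.
      rewrite Or, Os in Ec.
      assert (HD : 0 < DM M n c) by (apply (DM_pos M n r); [exact Hb|lra]).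
      assert (HW := Hw c Hc). unfold w in HW.
      assert (HE : exp (lam * hs c) < exp (lam * hr c)) by (apply exp_increasing; nra).
      assert (HN : 0 < INR n) by (apply lt_0_INR; lia).
      assert (0 < INR n * (exp (lam * hr c) * DM M n c - exp (lam * hs c) * DM M n c) * (b - a)).
      { apply Rmult_lt_0_compat; [apply Rmult_lt_0_compat; [lra|nra]|lra]. }
      lra. }
  apply Rnot_lt_le. intro Hlt.
  assert (W0 : 0 < w u0) by (unfold w; lra).
  destruct (continuity_ab_maj hr u0 s ltac:(lra) ltac:(intros c Hc; apply Cr; lra)) as [Mx [HMx HMxr]].
  destruct (Hsb (hr Mx)) as [del [Hdel Hdd]].
  set (t1 := (Rmax u0 (s - del) + s) / 2).
  assert (Ht1 : u0 < t1 < s /\ s - del < t1) by (unfold t1, Rmax; destruct Rle_dec; lra).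
  assert (W1 : w t1 <= 0).
  { unfold w. assert (hr t1 <= hr Mx) by (apply HMx; lra). assert (hr Mx < hs t1) by (apply Hdd; lra). lra. }
  assert (Cw' : forall p q, 0 <= p -> q < s -> forall x, p <= x <= q -> continuity_pt w x).
  { intros p q Hp Hq x Hx. apply Cw; lra. }
  destruct (Rlt_dec 0 (w 0)) as [W00|W00].
  - destruct (Req_dec u0 0) as [Z|Z].
    + subst u0. destruct (first_nonpos w 0 t1 ltac:(lra) (Cw' 0 t1 ltac:(lra) ltac:(lra)) W00 W1) as [b [Hb1 [Wb Hwb]]].
      apply (Main 0 b); try lra.
      * intros x Hx; apply Hwb; lra.
      * unfold psi; rewrite Hr0, Hs0; destruct n; [lia|]; simpl; lra.
      * apply (Lb b b); try lra. intros y Hy; apply Hwb; lra.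
    + destruct (first_nonpos w 0 t1 ltac:(lra) (Cw' 0 t1 ltac:(lra) ltac:(lra)) W00 W1) as [b [Hb1 [Wb Hwb]]].
      apply (Main 0 b); try lra.
      * intros x Hx; apply Hwb; lra.
      * unfold psi; rewrite Hr0, Hs0; destruct n; [lia|]; simpl; lra.
      * apply (Lb b b); try lra. intros y Hy; apply Hwb; lra.
  - assert (Hu0p : 0 < u0) by (destruct (Req_dec u0 0) as [Z|Z]; [subst; lra|lra]).
    destruct (last_nonpos w 0 u0 Hu0p (Cw' 0 u0 ltac:(lra) ltac:(lra)) ltac:(lra) W0) as [a [Ha1 [Wa Hwa]]].
    destruct (first_nonpos w u0 t1 ltac:(lra) (Cw' u0 t1 ltac:(lra) ltac:(lra)) W0 W1) as [b [Hb1 [Wb Hwb]]].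
    apply (Main a b); try lra.
    + intros x Hx. destruct (Rle_dec x u0); [apply Hwa; lra|apply Hwb; lra].
    + apply (La a (u0 - a)); try lra. intros y Hy; apply Hwa; lra.
    + apply (Lb b (b - u0)); try lra. intros y Hy; apply Hwb; lra.
Qed.
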